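(* 1. If an infinite binary word $w$ is uniformly recurrent and of bounded width, then $w$ is bounded weak abelian periodic. 2. There exists an infinite binary uniformly recurrent word which is weak abelian periodic but not of bounded width.
   Context: For a finite word $u$, $|u|_a$ is the number of occurrences of the letter $a$ in $u$, and $\rho_a(u)=|u|_a/|u|$ for nonempty $u$. An infinite word $w$ over a finite alphabet $\Sigma$ is weak abelian periodic (WAP) if $w=v_0v_1v_2\cdots$ with $v_0$ finite and $v_1,v_2,\dots$ nonempty finite words such that $\rho_a(v_i)=\rho_a(v_j)$ for all $a\in\Sigma$ and all $i,j\ge1$; it is bounded WAP if such a factorization exists with $|v_i|\le C$ for all $i$, for some constant $C$. An infinite word is uniformly recurrent if every factor occurs infinitely often and with bounded gaps between consecutive occurrences. The graphic $g_w$ of a binary word $w=w_1w_2\cdots$ is the piecewise linear function with $g_w(n)=|w_1\cdots w_n|_1-|w_1\cdots w_n|_0$ for integers $n\ge0$ and linear in between (steps $(1,-1)$ for $0$ and $(1,1)$ for $1$). A binary infinite word $w$ is of bounded width if there exist rationals $a,b_1,b_2$ with $ax+b_1\le g_w(x)\le ax+b_2$ for all $x\ge0$. *)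

(* Defs.v *)
From HB Require Import structures.
From mathcomp Require Import all_boot all_order all_algebra.
From mathcomp Require Import reals.
Set Implicit Arguments. Unset Strict Implicit. Unset Printing Implicit Defensive.
Import Order.TTheory GRing.Theory Num.Theory.
Local Open Scope ring_scope.

(* An infinite binary word w = w_1 w_2 w_3 ... is encoded as w : nat -> bool,
   w i being the letter w_{i+1}; false = letter 0, true = letter 1. *)
Definition word := nat -> bool.

Definition occ (w : word) (a : bool) (i n : nat) : nat :=
  count (fun k => w k == a) (iota i n).

Definition rho (w : word) (a : bool) (i j : nat) : rat :=
  (occ w a i (j - i))%:R / (j - i)%:R.

(* A factorization w = v_0 v_1 v_2 ... is given by the cut points p :
   v_0 = w[0, p 0) (possibly empty), v_{k+1} = w[p k, p (k+1)).
   The v_k, k >= 1, are nonempty iff p is strictly increasing. *)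
Definition WAP_fact (w : word) (p : nat -> nat) : Prop :=
  (forall k, (p k < p k.+1)%N) /\
  (forall (a : bool) (k l : nat),
      rho w a (p k) (p k.+1) = rho w a (p l) (p l.+1)).

Definition WAP (w : word) : Prop := exists p, WAP_fact w p.

Definition bounded_WAP (w : word) : Prop :=
  exists p, WAP_fact w p /\ exists C : nat, forall k, (p k.+1 - p k <= C)%N.

Definition occurs_at (w : word) (i n j : nat) : Prop :=
  forall k, (k < n)%N -> w (j + k) = w (i + k).

Definition uniformly_recurrent (w : word) : Prop :=
  forall i n : nat,
    (forall m, exists j, (m <= j)%N /\ occurs_at w i n j) /\
    (exists G : nat, forall j, occurs_at w i n j ->
        exists j', (j < j' <= j + G)%N /\ occurs_at w i n j').

Definition graphic_nat (w : word) (n : nat) : int :=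
  (occ w true 0 n)%:Z - (occ w false 0 n)%:Z.

(* the graphic g_w, piecewise linear, on x >= 0 (step (1,1) for letter 1,
   (1,-1) for letter 0) *)
Definition graphic (R : realType) (w : word) (x : R) : R :=
  let n := `|Num.floor x|%N in
  (graphic_nat w n)%:~R + (x - n%:R) * (if w n then 1 else -1).

Definition bounded_width (R : realType) (w : word) : Prop :=
  exists a b1 b2 : rat, forall x : R, 0 <= x ->
    ratr a * x + ratr b1 <= graphic w x /\ graphic w x <= ratr a * x + ratr b2.

(* Main.v *)
Require Import Defs.
From HB Require Import structures.
From mathcomp Require Import all_boot all_order all_algebra.
From mathcomp Require Import reals zify ring lra.
From Stdlib Require Import Classical ClassicalEpsilon.
Import Order.TTheory GRing.Theory Num.Theory.
Local Open Scope ring_scope.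

Lemma occD (w : word) a i n m : occ w a i (n + m) = (occ w a i n + occ w a (i + n) m)%N.
Proof. by rewrite /occ iotaD count_cat. Qed.

Lemma occTF (w : word) i n : (occ w true i n + occ w false i n)%N = n.
Proof.
rewrite /occ -[in RHS](size_iota i n) -(count_predC (fun k => w k == true)).
congr (_ + _)%N; apply: eq_count => k /=; by case: (w k).
Qed.

Lemma occ_shift (w : word) a i n j : occurs_at w i n j -> occ w a j n = occ w a i n.
Proof.
move=> H; rewrite /occ -(addn0 j) -(addn0 i) !iotaDl !count_map.
apply: eq_in_count => k; rewrite mem_iota add0n => /andP [_ hk] /=.
by rewrite H.
Qed.

Lemma ex_max (E : nat -> nat) B : (forall n, (E n <= B)%N) -> exists n0, forall n, (E n <= E n0)%N.
Proof.
elim: B => [|B IH] hB.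
  by exists 0%N => n; have := hB n; have := hB 0%N; lia.
case: (classic (exists n, E n = B.+1)) => [[n0 hn0]|hn].
  by exists n0 => n; rewrite hn0.
apply: IH => n; have := hB n; case: (E n =P B.+1) => [e|ne]; last lia.
by exfalso; apply: hn; exists n.
Qed.

Definition Dfun (w : word) (q pn : int) (n : nat) : int :=
  q * graphic_nat w n - pn * n%:Z.

Lemma Ddiff w q pn s l :
  Dfun w q pn (s + l) - Dfun w q pn s =
  q * ((occ w true s l)%:Z - (occ w false s l)%:Z) - pn * l%:Z.
Proof.
rewrite /Dfun /graphic_nat !occD !add0n !PoszD; ring.
Qed.

Lemma rho_block w a s l (q pn : int) : (0 < l)%N -> q != 0 ->
  q * ((occ w true s l)%:Z - (occ w false s l)%:Z) = pn * l%:Z ->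
  rho w a s (s + l) = if a then (q%:~R + pn%:~R) / (2 * q%:~R) else (q%:~R - pn%:~R) / (2 * q%:~R).
Proof.
move=> l0 q0 e.
have hTF := occTF w s l.
have e' : q%:~R * ((occ w true s l)%:R - (occ w false s l)%:R) = pn%:~R * l%:R :> rat.
  have := congr1 (fun z : int => z%:~R : rat) e.
  by rewrite /= !intrM intrB.
have hTF' : (occ w true s l)%:R + (occ w false s l)%:R = l%:R :> rat by rewrite -natrD hTF.
have q0' : q%:~R != 0 :> rat by rewrite intr_eq0.
have l0' : l%:R != 0 :> rat by rewrite pnatr_eq0 -lt0n.
rewrite /rho addKn.
move: e' hTF'; set T := (occ w true s l)%:R; set F := (occ w false s l)%:R.
set L := l%:R; set Q := q%:~R; set P := pn%:~R => e' hTF'.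
have hT : 2 * Q * T = (Q + P) * L.
  have -> : 2 * Q * T = Q * (T + F) + Q * (T - F) by ring.
  by rewrite hTF' e'; ring.
have hF : 2 * Q * F = (Q - P) * L.
  have -> : 2 * Q * F = Q * (T + F) - Q * (T - F) by ring.
  by rewrite hTF' e'; ring.
have Q2 : 2 * Q != 0 by rewrite mulf_neq0.
case: a; apply/eqP; rewrite eqr_div //; apply/eqP.
  by rewrite -/T mulrC hT.
by rewrite -/F mulrC hF.
Qed.

Lemma graphic_int (R : realType) w N : graphic w (N%:R : R) = (graphic_nat w N)%:~R.
Proof.
rewrite /graphic.
have -> : Num.floor (N%:R : R) = N%:Z by exact: (intrKfloor (R:=R) N%:Z).
by rewrite /= subrr mul0r addr0.
Qed.

Lemma bw_rat (R : realType) w : bounded_width R w ->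
  exists a b1 b2 : rat, forall N : nat,
    a * N%:R + b1 <= (graphic_nat w N)%:~R /\ (graphic_nat w N)%:~R <= a * N%:R + b2.
Proof.
move=> [a [b1 [b2 H]]]; exists a, b1, b2 => N.
have [h1 h2] := H N%:R (ler0n _ _).
rewrite graphic_int in h1 h2.
have e c : ratr (a * N%:R + c) = ratr a * N%:R + ratr c :> R.
  by rewrite rmorphD rmorphM /= ratr_nat.
by split; rewrite -(ler_rat R) e ratr_int.

Qed.


Lemma part1 (R : realType) (w : word) :
  uniformly_recurrent w -> bounded_width R w -> bounded_WAP w.
Proof.
move=> UR /bw_rat [a [b1 [b2 H]]].
set q := denq a; set pn := numq a.
have q0 : 0 < q := denq_gt0 a.
have q0' : q != 0 by rewrite gt_eqF.
have hpn : pn%:~R = a * q%:~R :> rat := numqE a.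
pose D := Dfun w q pn.
set lo := Num.floor (q%:~R * b1 : rat); set hi := Num.ceil (q%:~R * b2 : rat).
have hD n : lo <= D n <= hi.
  have [h1 h2] := H n.
  have eD : (D n)%:~R = q%:~R * ((graphic_nat w n)%:~R - a * n%:R) :> rat.
    by rewrite /D /Dfun intrB !intrM hpn; ring.
  have qr : 0 < q%:~R :> rat by rewrite ltr0z.
  apply/andP; split.
    rewrite -(ler_int rat); apply: le_trans (floor_le _) _.
    by rewrite eD ler_pM2l //; lra.
  rewrite -(ler_int rat); apply: le_trans (ceil_ge _).
  by rewrite eD ler_pM2l //; lra.
pose E n := `|D n - lo|%N.
have hE n : (E n)%:Z = D n - lo.
  by have := hD n; rewrite /E; lia.
have [nmax hmax] := @ex_max E `|hi - lo|%N (fun n => ltac:(have := hD n; rewrite /E; lia)).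
have [nmin hmin] := @ex_max (fun n => `|hi - lo|%N - E n)%N `|hi - lo|%N (fun n => leq_subr _ _).
have Dmax n : D n <= D nmax.
  by have := hmax n; have := hE n; have := hE nmax; lia.
have Dmin n : D nmin <= D n.
  have := hmin n; have := hE n; have := hE nmin; have := hD n; have := hD nmin.
  rewrite /E; lia.
have shift i L j : occurs_at w i L j -> D (j + L)%N - D j = D (i + L)%N - D i.
  by move=> o; rewrite /D !Ddiff (@occ_shift w true i L j o) (@occ_shift w false i L j o).
set i0 := minn nmin nmax; set L := (maxn nmin nmax - minn nmin nmax)%N.
have key j : occurs_at w i0 L j -> D j = D i0.
  move=> o; have := shift _ _ _ o.
  rewrite /i0 /L; case: (leqP nmin nmax) => hle.

    have -> : (nmin + (nmax - nmin) = nmax)%N by lia.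
    have := Dmax (j + (nmax - nmin))%N; have := Dmin j; lia.
  have -> : (nmax + (nmin - nmax) = nmin)%N by lia.
  have := Dmin (j + (nmin - nmax))%N; have := Dmax j; lia.
have [HA [G HG]] := UR i0 L.
have [j0 [_ o0]] := HA 0%N.
have hnext j : {j' | occurs_at w i0 L j -> (j < j' <= j + G)%N /\ occurs_at w i0 L j'}.
  apply: constructive_indefinite_description.
  case: (classic (occurs_at w i0 L j)) => o.
    by have [j' hj'] := HG j o; exists j'.
  by exists 0%N.
pose nx j := sval (hnext j).
pose p k := iter k nx j0.
have po k : occurs_at w i0 L (p k).
  elim: k => [//|k IH].
  rewrite /p iterS -/(p k); exact: (proj2 (svalP (hnext (p k)) IH)).
have pS k : (p k < p k.+1 <= p k + G)%N.
  rewrite /p iterS -/(p k); exact: (proj1 (svalP (hnext (p k)) (po k))).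
exists p; split; last by exists G => k; have := pS k; lia.
split; first by move=> k; have := pS k; lia.
have rk c k : rho w c (p k) (p k.+1) = if c then (q%:~R + pn%:~R) / (2 * q%:~R)
                                         else (q%:~R - pn%:~R) / (2 * q%:~R).
  have hl : (0 < p k.+1 - p k)%N by have := pS k; lia.
  have hk : (p k + (p k.+1 - p k) = p k.+1)%N by have := pS k; lia.
  have e : q * ((occ w true (p k) (p k.+1 - p k))%:Z - (occ w false (p k) (p k.+1 - p k))%:Z)
           = pn * (p k.+1 - p k)%N%:Z.
    have := Ddiff w q pn (p k) (p k.+1 - p k).
    rewrite hk -/D (key _ (po k)) (key _ (po k.+1)) subrr; lia.
  by have := @rho_block w c (p k) _ q pn hl q0' e; rewrite hk.
by move=> c k l; rewrite !rk.
Qed.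

Lemma occS (w : word) a i n : occ w a i n.+1 = (occ w a i n + (w (i + n) == a))%N.
Proof. by rewrite -addn1 occD /occ /= addn0. Qed.

Section P2.
Local Open Scope nat_scope.
Definition tpd (k : nat) : bool := odd (logn 2 k).
Definition wpd : word := fun n => tpd n.+1.

Lemma tpdO k : tpd (k.*2.+1)%N = false.
Proof.
rewrite /tpd lognE.
idtac.
have -> : (2 %| k.*2.+1) = false by rewrite dvdn2 /= odd_double.
by rewrite !andbF.
Qed.

Lemma tpdE k : (0 < k)%N -> tpd (k.*2)%N = ~~ tpd k.
Proof.
move=> k0; rewrite /tpd lognE /= dvdn2 odd_double /=.
have -> : (0 < k.*2)%N by rewrite double_gt0.
by rewrite -muln2 mulnK.
Qed.

Lemma tpd_per K : forall k m, (0 < k < 2 ^ K)%N -> tpd (k + m * 2 ^ K) = tpd k.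
Proof.
elim: K => [|K IH] k m /andP [k0 kK]; first by rewrite expn0 in kK; lia.
have hk := odd_double_half k.
move: (k./2) hk => k' hk.
case ok: (odd k) hk => /= hk; subst k.
  have -> : (k'.*2).+1 + m * 2 ^ K.+1 = (k' + m * 2 ^ K).*2.+1 by rewrite expnS; lia.
  by rewrite !tpdO.
have h0 : 0 < k' by lia.
rewrite add0n in k0 kK *.
have -> : k'.*2 + m * 2 ^ K.+1 = (k' + m * 2 ^ K).*2 by rewrite expnS; lia.
rewrite !tpdE //; last by lia.
rewrite IH //.

rewrite expnS in kK; lia.
Qed.

Definition S N := occ wpd true 0 N.

Lemma SS N : S N.+1 = (S N + tpd N.+1)%N.
Proof. by rewrite /S occS add0n /wpd; case: (tpd N.+1). Qed.

Lemma S2 N : (S (N.*2)%N + S N)%N = N.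
Proof.
elim: N => [//|N IH].
rewrite doubleS !SS tpdO.
have := @tpdE N.+1 (ltn0Sn N); rewrite doubleS => ->.
case: (tpd N.+1) => /=; lia.

Qed.

Lemma S2O N : S (N.*2.+1)%N = S (N.*2)%N.
Proof. by rewrite SS tpdO addn0. Qed.

Lemma S4 N : S (4 * N) = (N + S N)%N.
Proof.
have h1 := S2 N; have h2 := S2 (N.*2).
have -> : 4 * N = (N.*2).*2 by lia.
lia.
Qed.

Lemma S3 : S 3 = 1%N.
Proof. by vm_compute. Qed.

End P2.

Section P2b.
Local Open Scope nat_scope.
Lemma S34 m : S (3 * 4 ^ m) = 4 ^ m.
Proof.
elim: m => [|m IH]; first by rewrite muln1 S3.
by rewrite expnS mulnCA S4 IH; lia.
Qed.

Fixpoint Nq m := if m is m'.+1 then 4 * Nq m' + 1 else 0.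

Lemma SNq m : 3 * S (Nq m) + m = Nq m.
Proof.
elim: m => [//|m IH] /=.
have -> : 4 * Nq m + 1 = ((Nq m).*2.*2).+1 by lia.
rewrite S2O; have -> : (Nq m).*2.*2 = 4 * Nq m by lia.
rewrite S4; lia.
Qed.

Lemma wpd_occ i n m : occurs_at wpd i n (i + m * 2 ^ (i + n)).
Proof.
move=> k kn; rewrite /wpd.
have -> : (i + m * 2 ^ (i + n) + k).+1 = (i + k).+1 + m * 2 ^ (i + n) by lia.
apply: tpd_per; apply/andP; split=> //.
have := ltn_expl (i + n) (ltnSn 1); lia.
Qed.

Lemma wpd_UR : uniformly_recurrent wpd.
Proof.
move=> i n; set P := 2 ^ (i + n).
have P0 : 0 < P by rewrite expn_gt0.
split.
  move=> m; exists (i + m * P); split; last exact: wpd_occ.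
  have : m <= m * P by rewrite leq_pmulr.
  lia.
exists (i + P) => j _; exists (i + (j %/ P).+1 * P); split; last exact: wpd_occ.
have h1 := ltn_ceil j P0; have h2 := leq_trunc_div j P.
rewrite mulSn in h1 *; lia.
Qed.
End P2b.

Lemma wpd_WAP : WAP wpd.
Proof.
exists (fun k => 3 * 4 ^ k)%N; split.
  move=> k; rewrite expnS; have : (0 < 4 ^ k)%N by rewrite expn_gt0. lia.
have key k a : rho wpd a (3 * 4 ^ k) (3 * 4 ^ k.+1) = if a then 3%:R^-1 else 2%:R / 3%:R.
  have e : (3 * 4 ^ k.+1 - 3 * 4 ^ k = 9 * 4 ^ k)%N by rewrite expnS; lia.
  have hT : occ wpd true (3 * 4 ^ k) (9 * 4 ^ k) = (3 * 4 ^ k)%N.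
    have := occD wpd true 0 (3 * 4 ^ k) (9 * 4 ^ k).
    have -> : (3 * 4 ^ k + 9 * 4 ^ k = 3 * 4 ^ k.+1)%N by rewrite expnS; lia.
    rewrite -/(S _) -/(S _) !S34 add0n expnS; lia.
  have hF := occTF wpd (3 * 4 ^ k) (9 * 4 ^ k).
  have X0 : (4 ^ k)%:R != 0 :> rat by rewrite pnatr_eq0 -lt0n expn_gt0.
  rewrite /rho e; case: a.
    by rewrite hT !natrM; field; rewrite X0.
  have -> : occ wpd false (3 * 4 ^ k) (9 * 4 ^ k) = (6 * 4 ^ k)%N by lia.
  by rewrite !natrM; field; rewrite X0.
by move=> a k l; rewrite !key.
Qed.

Lemma arch_rat (c B : rat) : 0 < c -> exists m : nat, B < c * m%:R.
Proof.
move=> c0; exists (Num.bound (`|B| / c)).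
have h := archi_boundP (divr_ge0 (normr_ge0 B) (ltW c0)).
rewrite ltr_pdivrMr // in h.
by apply: le_lt_trans (ler_norm B) _; rewrite mulrC.
Qed.

Lemma wpd_nbw (R : realType) : ~ bounded_width R wpd.
Proof.
move/bw_rat => [a [b1 [b2 H]]].
have gN N : (graphic_nat wpd N)%:~R = 2 * (S N)%:R - N%:R :> rat.
  have hF := occTF wpd 0 N; rewrite -/(S N) in hF.
  rewrite /graphic_nat -/(S N) intrB /=.
  change ((S N)%:R - (occ wpd false 0 N)%:R = 2 * (S N)%:R - N%:R :> rat).
  have hF' : (S N)%:R + (occ wpd false 0 N)%:R = N%:R :> rat by rewrite -natrD hF.
  lra.
case: (leP 0 (3 * a + 1)) => h.
  have [m hm] := arch_rat 2 (-3 * b1) (ltr0Sn _ 1).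
  have [h1 _] := H (Nq m).
  have e := SNq m.
  have e' : 3 * (S (Nq m))%:R + m%:R = (Nq m)%:R :> rat.
    by rewrite -[in RHS]e natrD natrM.
  rewrite gN in h1.
  have N0 : 0 <= (Nq m)%:R :> rat by [].
  nra.
have hc : 0 < - (3 * a + 1) by lra.
have [m hm] := arch_rat (- (3 * a + 1)) b2 hc.
have [_ h2] := H (3 * 4 ^ m)%N.
rewrite gN S34 in h2.
have hX : m%:R <= (4 ^ m)%:R :> rat by rewrite ler_nat ltnW // ltn_expl.
rewrite natrM in h2.
nra.
Qed.

Lemma part2 (R : realType) : exists w : word, uniformly_recurrent w /\ WAP w /\ ~ bounded_width R w.
Proof. exists wpd; split; [exact: wpd_UR | split; [exact: wpd_WAP | exact: wpd_nbw]]. Qed.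

Theorem proposition2 (R : realType) :
  (forall w : word, uniformly_recurrent w -> bounded_width R w -> bounded_WAP w) /\
  (exists w : word, uniformly_recurrent w /\ WAP w /\ ~ bounded_width R w).
Proof.
split; [exact: part1 | exact: part2].
Qed.
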